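(* Let $X$, $Y$, $\mathcal{E}$ be Euclidean-space-valued random variables on a probability space $(\Omega,\mathcal{F},P)$, and let $\Phi$ be a random variable measurable with respect to $\sigma(X)$. Let $\mathcal{E}_\phi\in\sigma(\mathcal{E})$ and $\mathcal{E}_\psi$ be as described in the context. If $\Phi\in\mathcal{I}$, then $\mathcal{E}_\psi$ is conditionally independent of $(\Phi,Y)$ given $\mathcal{E}_\phi$.
   Context: $\mathcal{E}_\phi$ denotes a minimal (with respect to generated $\sigma$-algebras) random variable measurable with respect to $\sigma(\mathcal{E})$ such that $\Phi$ is conditionally independent of $\mathcal{E}$ given $\mathcal{E}_\phi$ (so $P(\Phi\mid\mathcal{E})=P(\Phi\mid\mathcal{E}_\phi)$). It is assumed that there is a random variable $\mathcal{E}_\psi$, independent of $\mathcal{E}_\phi$, with $\sigma(\mathcal{E})=\sigma(\mathcal{E}_\phi,\mathcal{E}_\psi)$; accordingly each realization $\epsilon\in\mathrm{supp}(\mathcal{E})$ is written $\epsilon=(\epsilon_\phi,\epsilon_\psi)$. The set of invariant features is $\mathcal{I}=\{\Phi\in\sigma(X): p(Y\mid\Phi,\epsilon)=p(Y\mid\Phi)\ \text{for all }\epsilon\in\mathrm{supp}(\mathcal{E})\}$, assumed non-empty. *)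

(* Defs.v *)
From HB Require Import structures.
From mathcomp Require Import all_boot all_order all_algebra.
From mathcomp Require Import all_classical all_reals all_analysis.
Set Implicit Arguments. Unset Strict Implicit. Unset Printing Implicit Defensive.
Import Order.TTheory GRing.Theory Num.Theory.
Local Open Scope classical_set_scope.
Local Open Scope ring_scope.

(* A Euclidean-space-valued random variable with values in R^n is represented
   by its n real coordinate functions X : 'I_n -> T -> R. *)
Section Defs.
Context d (T : measurableType d) (R : realType).

Definition rv_sigma n (X : 'I_n -> T -> R) : set (set T) :=
  <<s [set X i @^-1` B | i in [set: 'I_n] & B in [set B : set R | measurable B]] >>.

Definition is_rv n (X : 'I_n -> T -> R) : Prop :=
  forall i, measurable_fun [set: T] (X i).

Definition sigma_join (G1 G2 : set (set T)) : set (set T) := <<s G1 `|` G2 >>.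

Definition G_measurable (G : set (set T)) (f : T -> R) : Prop :=
  forall B : set R, measurable B -> G (f @^-1` B).

Definition G_measurable_rv (G : set (set T)) n (X : 'I_n -> T -> R) : Prop :=
  forall i, G_measurable G (X i).

Variable P : probability T R.

Definition cond_prob_version (G : set (set T)) (A : set T) (f : T -> R) : Prop :=
  [/\ G_measurable G f,
      P.-integrable [set: T] (EFin \o f) &
      forall C, G C -> (\int[P]_(x in C) (f x)%:E = P (A `&` C))%E].

(* conditional independence of sigma-algebras G1 and G2 given H:
   P(A ∩ B | H) = P(A | H) P(B | H) a.s. for all A in G1, B in G2 *)
Definition cond_indep (G1 G2 H : set (set T)) : Prop :=
  forall A B, G1 A -> G2 B ->
    exists fA fB : T -> R,
      [/\ cond_prob_version H A fA, cond_prob_version H B fB &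
          cond_prob_version H (A `&` B) (fA \* fB)].

Definition indep (G1 G2 : set (set T)) : Prop :=
  forall A B, G1 A -> G2 B -> P (A `&` B) = (P A * P B)%E.

(* Phi is an invariant feature: p(Y | Phi, E) = p(Y | Phi), i.e. for every
   event A in sigma(Y), P(A | sigma(Phi, E)) has a sigma(Phi)-measurable version. *)
Definition invariant_feature k ny ne (Phi : 'I_k -> T -> R)
    (Y : 'I_ny -> T -> R) (E : 'I_ne -> T -> R) : Prop :=
  forall A, rv_sigma Y A ->
    exists f : T -> R, G_measurable (rv_sigma Phi) f /\
      cond_prob_version (sigma_join (rv_sigma Phi) (rv_sigma E)) A f.

End Defs.

(* Main.v *)
Require Import Defs.
From HB Require Import structures.
From mathcomp Require Import all_boot all_order all_algebra.
From mathcomp Require Import all_classical all_reals all_analysis.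
From mathcomp Require Import measurable_realfun.
Set Implicit Arguments. Unset Strict Implicit. Unset Printing Implicit Defensive.
Import Order.TTheory GRing.Theory Num.Theory.
Local Open Scope classical_set_scope.
Local Open Scope ring_scope.
Section Sub.
Local Open Scope ereal_scope.
Context d (T : measurableType d) (R : realType) (P : probability T R).
Variable G : set (set T).
Hypothesis hG : forall A, <<s G>> A -> measurable A.
Local Notation S := (g_sigma_algebraType G).

Lemma mid : measurable_fun [set: T] (id : T -> S).
Proof. by move=> _ A mA; rewrite setTI; exact: hG. Qed.

Lemma mfun_ST d' (U : measurableType d') (f : T -> U) :
  measurable_fun [set: S] (f : S -> U) -> measurable_fun [set: T] f.
Proof.
move=> mf _ Y mY; rewrite setTI; apply: hG.
by have := mf measurableT Y mY; rewrite setTI.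
Qed.

Definition msf : set S -> \bar R := fun A => P (A : set T).

Let msf0 : msf set0 = 0. Proof. exact: measure0. Qed.
Let msf_ge0 A : 0 <= msf A. Proof. exact: measure_ge0. Qed.
Let msf_sadd : semi_sigma_additive msf.
Proof.
move=> F mF tF mUF.
exact: (@measure_semi_sigma_additive _ _ _ P F (fun n => hG (mF n)) tF (hG mUF)).
Qed.

HB.instance Definition _ := isMeasure.Build _ _ _ msf msf0 msf_ge0 msf_sadd.
HB.instance Definition _ := Measure_isProbability.Build _ _ _ msf (probability_setT P).

Lemma ge0_int_transfer (f : S -> \bar R) (E : set T) :
  <<s G>> E -> measurable_fun [set: S] f ->
  (forall x, E x -> 0 <= f x) ->
  \int[msf]_(x in (E : set S)) f x = \int[P]_(x in E) f x.
Proof.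
move=> mE mf f0.
have := @ge0_integral_pushforward _ _ T S R id mid P E f mE
  (measurable_funTS mf) (fun y yE => f0 y (set_mem yE)).
move=> <-.
apply: eq_measure_integral; first by move=> _ Y mY; rewrite setTI; exact: hG.
by [].
Qed.


Lemma int_transfer (f : S -> \bar R) (E : set T) :
  <<s G>> E -> measurable_fun [set: S] f ->
  \int[msf]_(x in (E : set S)) f x = \int[P]_(x in E) f x.
Proof.
move=> mE mf; rewrite integralE [RHS]integralE.
rewrite ge0_int_transfer //; last exact: measurable_funepos.
rewrite ge0_int_transfer //; last exact: measurable_funeneg.
Qed.

Lemma mS_meas (E : set S) : measurable E -> d.-measurable (E : set T).
Proof. exact: hG. Qed.

Lemma version_ae (f1 f2 : S -> R) :
  measurable_fun [set: S] f1 -> measurable_fun [set: S] f2 ->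
  P.-integrable [set: T] (EFin \o f1) ->
  (forall C, <<s G>> C ->
    \int[P]_(x in C) (f1 x)%:E = \int[P]_(x in C) (f2 x)%:E) ->
  ae_eq P [set: T] (EFin \o f1) (EFin \o f2).
Proof.
move=> mf1 mf2 if1 eqC.
have sT : <<s G>> [set: T] by exact: (@measurableT _ S).
have mf1' : measurable_fun [set: S] (EFin \o f1) by apply/measurable_EFinP.
have mf2' : measurable_fun [set: S] (EFin \o f2) by apply/measurable_EFinP.
have i1 : msf.-integrable [set: S] (EFin \o f1).
  apply/integrableP; split => //.
  rewrite (@ge0_int_transfer (fun x => `|(f1 x)%:E|)) //.
  - by case/integrableP : if1.
  - exact: measurableT_comp.
have := @integral_ae_eq _ S R msf [set: S] measurableT _ _ i1 mf2'.
case.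
  by move=> E _ mE; rewrite !int_transfer //; exact: eqC.
move=> A [mA A0 sub]; exists A; split => //; exact: hG.
Qed.

Definition psi (D : set T) : T -> (S * R)%type := fun x => (x : S, \1_D x).

Lemma mpsi D : measurable D -> measurable_fun [set: T] (psi D).
Proof.
move=> mD; apply: measurable_fun_pair; first exact: mid.
exact: measurable_indic.
Qed.

Definition PF D (mD : measurable D) : {measure set (S * R)%type -> \bar R} :=
  measure_function_pushforward__canonical__measure_function_Measure P (mpsi mD).

Definition EX (E : set T) : set (S * R)%type := (E : set S) `*` [set (1:R)%R].

Lemma psi_pre1 D (E : set T) : psi D @^-1` (EX E) = E `&` D.
Proof.
apply/seteqP; split => x /=.
  move=> [Ex]; rewrite /psi /= indicE /=.
  by case: (boolP (x \in D)) => [/set_mem|_ /eqP]; [|rewrite eq_sym oner_eq0].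
by move=> [Ex Dx]; split => //=; rewrite indicE mem_set.
Qed.

Lemma PF_int D (mD : measurable D) (f : S -> \bar R) (E : set T) :
  <<s G>> E -> measurable_fun [set: S] f -> (forall x, 0 <= f x) ->
  \int[PF mD]_(p in EX E) f p.1 =
  \int[P]_(x in E `&` D) f x.
Proof.
move=> mE mf f0.
have mX : measurable (EX E).
  apply: measurableX => //; exact: measurable_set1.
rewrite (@ge0_integral_pushforward _ _ T _ R (psi D) (mpsi mD) P _ (fun p => f p.1) mX).
- by rewrite psi_pre1.
- apply: measurable_funTS; apply: measurableT_comp => //.
- by move=> y _; exact: f0.
Qed.

Lemma psi_preA D (E : set T) (A : set (S * R)%type) : A `<=` EX E ->
  psi D @^-1` A = [set x | A (x, 1%R)] `&` D.
Proof.
move=> AX; apply/seteqP; split => x /=.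
  rewrite /psi indicE; case: (boolP (x \in D)) => [/set_mem xD|xD] /= Ax.
    by split.
  by have [_ /=] := AX _ Ax; move/eqP; rewrite eq_sym oner_eq0.
by move=> [Ax Dx]; rewrite /psi indicE mem_set.
Qed.

Lemma sec_meas (A : set (S * R)%type) : measurable A -> <<s G>> [set x | A (x, 1%R)].
Proof.
move=> mA; have := @measurable_ysection _ _ S R A 1%R mA.
by rewrite /ysection; under eq_set do rewrite inE.
Qed.

Lemma K_ge0 D1 D2 (m1 : measurable D1) (m2 : measurable D2) (c : R) (c0 : (0 <= c)%R) :
  (forall Y, <<s G>> Y -> P (Y `&` D1) = c%:E * P (Y `&` D2)) ->
  forall (f : S -> \bar R) (E : set T), <<s G>> E -> measurable_fun [set: S] f ->
  (forall x, 0 <= f x) ->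
  \int[P]_(x in E `&` D1) f x = c%:E * \int[P]_(x in E `&` D2) f x.
Proof.
move=> hc f E mE mf f0.
rewrite -(PF_int m1) // -(PF_int m2) //.
have mX : measurable (EX E).
  apply: measurableX => //; exact: measurable_set1.
have mfX : measurable_fun (EX E) (fun p : (S * R)%type => f p.1).
  by apply: measurable_funTS; apply: measurableT_comp.
transitivity (\int[mscale (NngNum c0) (PF m2)]_(p in EX E) f p.1).
  apply: eq_measure_integral => A mA AX.
  rewrite /mscale /= /pushforward !(psi_preA _ AX).
  rewrite /mscale /= /pushforward (psi_preA _ AX); exact: hc (sec_meas mA).
by rewrite ge0_integral_mscale.
Qed.

Lemma K_int D1 D2 (m1 : measurable D1) (m2 : measurable D2) (c : R) (c0 : (0 <= c)%R) :
  (forall Y, <<s G>> Y -> P (Y `&` D1) = c%:E * P (Y `&` D2)) ->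
  forall (f : S -> R) (E : set T), <<s G>> E -> measurable_fun [set: S] f ->
  P.-integrable [set: T] (EFin \o f) ->
  \int[P]_(x in E `&` D1) (f x)%:E = c%:E * \int[P]_(x in E `&` D2) (f x)%:E.
Proof.
move=> hc f E mE mf fi.
have mf' : measurable_fun [set: S] (EFin \o f) by apply/measurable_EFinP.
have mED2 : measurable (E `&` D2) by apply: measurableI => //; exact: hG.
have fi2 : P.-integrable (E `&` D2) (EFin \o f) by exact: integrableS fi.
rewrite integralE [X in _ = _ * X]integralE.
rewrite (K_ge0 m1 m2 c0 hc mE (measurable_funepos mf')); last by move=> x; exact: funepos_ge0.
rewrite (K_ge0 m1 m2 c0 hc mE (measurable_funeneg mf')); last by move=> x; exact: funeneg_ge0.
have fn := integrable_neg_fin_num mED2 fi2.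
set a := \int[P]_(x in E `&` D2) (EFin \o f)^\+ x.
set b := \int[P]_(x in E `&` D2) (EFin \o f)^\- x.
by rewrite (@muleBr _ c%:E a b) // fin_num_adde_defl // fin_numN.
Qed.

Section exist.
Variable B : set T.
Hypothesis mB : measurable B.

Definition nuf : set S -> \bar R := fun A => P ((A : set T) `&` B).
Let nuf0 : nuf set0 = 0. Proof. by rewrite /nuf set0I measure0. Qed.
Let nuf_ge0 A : 0 <= nuf A. Proof. exact: measure_ge0. Qed.
Let nuf_sadd : semi_sigma_additive nuf.
Proof.
move=> F mF tF mUF; rewrite /nuf setI_bigcupl.
apply: (@measure_semi_sigma_additive _ _ _ P (fun n => F n `&` B)).
- by move=> n; apply: measurableI => //; exact: hG (mF n).
- apply/trivIsetP => i j _ _ ij.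
  by rewrite setIACA setIid; move/trivIsetP : tF => /(_ i j I I ij) ->; rewrite set0I.
- by rewrite -setI_bigcupl; apply: measurableI => //; exact: hG mUF.
Qed.
HB.instance Definition _ := isMeasure.Build _ _ _ nuf nuf0 nuf_ge0 nuf_sadd.
Let nuf_fin : fin_num_fun nuf.
Proof. by move=> A mA; rewrite /nuf fin_num_measure//; apply: measurableI => //; exact: hG. Qed.
HB.instance Definition _ := Measure_isFinite.Build _ _ _ nuf nuf_fin.

Let nuf_dom : nuf `<< msf.
Proof.
move=> N N0 A mA AN; apply/eqP; rewrite eq_le measure_ge0 andbT.
rewrite -(N0 A mA AN) /nuf /msf le_measure // inE; last exact: hG.
by apply: measurableI => //; exact: hG.
Qed.

Lemma cond_exists : exists f : T -> R, cond_prob_version P <<s G>> B f.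
Proof.
pose rn := Radon_Nikodym_SigmaFinite.f nuf msf.
have rn0 := Radon_Nikodym_SigmaFinite.f_ge0 nuf_dom.
have rnfin := Radon_Nikodym_SigmaFinite.f_fin_num nuf_dom.
have rnint := Radon_Nikodym_SigmaFinite.f_integrable nuf_dom.
have rnE := Radon_Nikodym_SigmaFinite.f_integral nuf_dom.
pose g : S -> R := fun x => fine (rn x).
have gE : (EFin \o g) = rn by apply/funext => x /=; rewrite fineK.
have mrn : measurable_fun [set: S] rn := measurable_int _ rnint.
have mg : measurable_fun [set: S] g by apply/measurable_EFinP; rewrite gE.
exists g; split.
- move=> Y mY; have := mg measurableT Y mY; by rewrite setTI.
- apply/integrableP; split; first by apply: mfun_ST; apply/measurable_EFinP.
  have sT : <<s G>> [set: T] by exact: (@measurableT _ S).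
  rewrite -(@ge0_int_transfer (fun x => `|(g x)%:E|)) //.
  + have : msf.-integrable [set: S] (EFin \o g) by rewrite gE.
    by case/integrableP.
  + by apply: measurableT_comp => //; apply/measurable_EFinP.
- move=> C mC.
  rewrite -ge0_int_transfer //.
  + by rewrite -/(EFin \o g); rewrite gE -rnE // /nuf setIC.
  + by apply/measurable_EFinP.
  + by move=> x _; rewrite lee_fin fine_ge0.
Qed.
End exist.
End Sub.

Section Main.
Local Open Scope ereal_scope.
Context d (T : measurableType d) (R : realType) (P : probability T R).

Lemma rv_meas n (X : 'I_n -> T -> R) : is_rv X -> forall A, rv_sigma X A -> measurable A.
Proof.
move=> hX; apply: smallest_sub; first exact: sigma_algebra_measurable.
move=> _ [i _ [B mB <-]]; have := hX i measurableT B mB; by rewrite setTI.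
Qed.

Lemma Gm_sub (H : set (set T)) (sH : sigma_algebra setT H) n (Z : 'I_n -> T -> R) :
  G_measurable_rv H Z -> forall A, rv_sigma Z A -> H A.
Proof.
move=> hZ; apply: smallest_sub => //.
by move=> _ [i _ [B mB <-]]; exact: hZ.
Qed.

Lemma gsI (K : set (set T)) A B : <<s K>> A -> <<s K>> B -> <<s K>> (A `&` B).
Proof. move=> hA hB; exact: (@measurableI _ (g_sigma_algebraType K)). Qed.

Lemma gsT (K : set (set T)) : <<s K>> setT.
Proof. exact: (@measurableT _ (g_sigma_algebraType K)). Qed.

Lemma Gm_mfun (K : set (set T)) (f : g_sigma_algebraType K -> R) :
  G_measurable <<s K>> f <-> measurable_fun [set: g_sigma_algebraType K] f.
Proof.
split.
  by move=> hf _ Y mY; rewrite setTI; exact: hf.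
by move=> hf Y mY; have := hf measurableT Y mY; rewrite setTI.
Qed.


Lemma heart (sPhi sE : set (set T)) (KEphi : set (set T))
  (hEphi : forall A, <<s KEphi>> A -> measurable A) (A C : set T) :
  measurable A ->
  cond_indep P sPhi sE <<s KEphi>> ->
  (forall C', <<s KEphi>> C' -> P (C' `&` A) = P C' * P A) ->
  sE (A `&` C) -> <<s KEphi>> C ->
  forall Y, sPhi Y -> P (Y `&` (A `&` C)) = (fine (P A))%:E * P (Y `&` C).
Proof.
move=> mA hCI hind hAC hC Y hY.
have [fY [fAC [[gmY iY intY] [gmAC iAC intAC] [gmP iP intP]]]] := hCI Y _ hY hAC.
set c := fine (P A).
have PAE : P A = c%:E by rewrite fineK // fin_num_measure.
have c0 : (0 <= c)%R by rewrite fine_ge0 // measure_ge0.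
have mC : measurable C := hEphi _ hC.
pose g : T -> R := fun x => (c * \1_C x)%R.
have mg : measurable_fun [set: g_sigma_algebraType KEphi] g.
  apply: measurable_funM; first exact: measurable_cst.
  exact: (@measurable_indic _ (g_sigma_algebraType KEphi)).
have ae := version_ae hEphi (f1 := fAC) (f2 := g) (proj1 (Gm_mfun _) gmAC) mg iAC.
have {ae} ae : ae_eq P [set: T] (EFin \o fAC) (EFin \o g).
  apply: ae => C' hC'.
  rewrite intAC //.
  have mC' : measurable C' := hEphi _ hC'.
  rewrite /g; under eq_integral do rewrite EFinM.
  have mi : measurable_fun C' (fun x => (\1_C x)%:E : \bar R).
    exact/measurable_EFinP/measurable_funTS/measurable_indic.
  rewrite (@ge0_integralZl _ _ _ P C' mC' _ mi); last 2 first.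
  - by move=> x _; rewrite lee_fin.
  - by rewrite lee_fin.
  rewrite integral_indic // -setIA setIC hind; last exact: gsI.
  by rewrite PAE muleC.
have -> : Y `&` (A `&` C) = Y `&` (A `&` C) `&` C.
  by rewrite -setIA -(setIA A) setIid.
rewrite -intP //.
have mfY : measurable_fun [set: T] (EFin \o fY) by case/integrableP : iY.
have mfAC : measurable_fun [set: T] (EFin \o fAC) by case/integrableP : iAC.
have mfY' : measurable_fun [set: T] fY by apply/measurable_EFinP.
have mfAC' : measurable_fun [set: T] fAC by apply/measurable_EFinP.
rewrite (@ae_eq_integral _ _ _ P C (fun x => (fY x * c)%:E)) //.
- under eq_integral do rewrite EFinM.
  rewrite integralZr //; last exact: integrableS iY.
  by rewrite intY // muleC.
- apply/measurable_EFinP/measurable_funTS; exact: measurable_funM.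
- apply/measurable_EFinP/measurable_funTS; apply: measurable_funM => //.
- move: ae; apply: filterS => x /= h Cx.
  have := h I; case => ->; by rewrite /g indicE mem_set // mulr1.
Qed.

Lemma star (KPhi KY KEphi : set (set T)) (sE : set (set T)) (A C : set T) :
  (forall X, <<s KPhi>> X -> measurable X) ->
  (forall X, <<s KY>> X -> measurable X) ->
  (forall X, <<s KEphi>> X -> measurable X) ->
  measurable A -> <<s KEphi>> C -> sE (A `&` C) -> sE C ->
  (forall C', <<s KEphi>> C' -> P (C' `&` A) = P C' * P A) ->
  cond_indep P <<s KPhi>> sE <<s KEphi>> ->
  (forall B2, <<s KY>> B2 -> exists f : T -> R, G_measurable <<s KPhi>> f /\
     cond_prob_version P (sigma_join <<s KPhi>> sE) B2 f) ->
  forall B, sigma_join <<s KPhi>> <<s KY>> B ->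
    P (A `&` B `&` C) = (fine (P A))%:E * P (B `&` C).
Proof.
move=> hPhi hY hEphi mA hC hAC hCE hind hCI hinv.
set c := fine (P A).
have PAE : P A = c%:E by rewrite fineK // fin_num_measure.
have c0 : (0 <= c)%R by rewrite fine_ge0 // measure_ge0.
have mC : measurable C := hEphi _ hC.
have hh := heart hEphi mA hCI hind hAC hC.
pose Pi := [set X | exists B1 B2, [/\ <<s KPhi>> B1, <<s KY>> B2 & X = B1 `&` B2]].
have hPi : forall X, Pi X -> measurable X.
  move=> _ [B1 [B2 [h1 h2 ->]]]; apply: measurableI; [exact: hPhi|exact: hY].
have hPis : forall X, <<s Pi>> X -> measurable X.
  apply: smallest_sub => //; exact: sigma_algebra_measurable.
have sub : forall B, sigma_join <<s KPhi>> <<s KY>> B -> <<s Pi>> B.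
  apply: smallest_sub; first exact: smallest_sigma_algebra.
  move=> B [h|h]; apply: sub_sigma_algebra.
  - by exists B, setT; split => //; [exact: gsT|rewrite setIT].
  - by exists setT, B; split => //; [exact: gsT|rewrite setTI].
move=> B /sub; move: B.
apply: (@dynkin_induction _ (g_sigma_algebraType Pi) Pi
  (fun B => P (A `&` B `&` C) = c%:E * P (B `&` C))) => //.
- move=> X Y [B1 [B2 [h1 h2 ->]]] [B1' [B2' [h1' h2' ->]]].
  exists (B1 `&` B1'), (B2 `&` B2'); split; [exact: gsI|exact: gsI|].
  by apply/seteqP; split => x /=; tauto.
- by rewrite setIT setTI setIC hind // PAE muleC.
- move=> _ [B1 [B2 [h1 h2 ->]]].
  have [f [gmf [_ iF intF]]] := hinv B2 h2.
  have hPE1 : sigma_join <<s KPhi>> sE (B1 `&` (A `&` C)).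
    by apply: gsI; apply: sub_sigma_algebra; [left|right].
  have hPE2 : sigma_join <<s KPhi>> sE (B1 `&` C).
    by apply: gsI; apply: sub_sigma_algebra; [left|right].
  have mAC : measurable (A `&` C) by exact: measurableI.
  rewrite (_ : A `&` (B1 `&` B2) `&` C = B2 `&` (B1 `&` (A `&` C))); last first.
    by apply/seteqP; split => x /=; tauto.
  rewrite -intF //.
  rewrite (K_int hPhi mAC mC c0 hh h1 (proj1 (Gm_mfun _) gmf) iF).
  rewrite intF //; congr (_ * P _).
  by apply/seteqP; split => x /=; tauto.
- move=> X mX hX0.
  have mXT := hPis _ mX.
  have hX : P (A `&` (X : set T) `&` C) = c%:E * P ((X : set T) `&` C) := hX0.
  have lty Z : measurable Z -> P Z < +oo.
    by move=> mZ; rewrite ltey_eq fin_num_measure.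
  have mAC : measurable (A `&` C) by exact: measurableI.
  rewrite (_ : A `&` ~` X `&` C = (A `&` C) `\` X); last first.
    by apply/seteqP; split => x /=; tauto.
  rewrite (_ : ~` X `&` C = C `\` X); last first.
    by apply/seteqP; split => x /=; tauto.
  rewrite !measureD //; try exact: lty.
  rewrite (_ : A `&` C `&` X = A `&` X `&` C); last first.
    by apply/seteqP; split => x /=; tauto.
  change (P (A `&` C) - P (A `&` X `&` C) = c%:E * (P C - P (C `&` X))).
  rewrite hX setIC hind // PAE (setIC C X).
  have fC : P (X `&` C) \is a fin_num.
    by apply: fin_num_measure; exact: measurableI.
  rewrite muleBr //; last by apply: fin_num_adde_defl; rewrite fin_numN.
  by rewrite muleC.
- move=> F mF tF hF0.
  have hF n : P (A `&` (F n : set T) `&` C) = c%:E * P ((F n : set T) `&` C) := hF0 n.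
  have mFT n : measurable (F n : set T) := hPis _ (mF n).
  change (P (A `&` \bigcup_k (F k : set T) `&` C) =
          c%:E * P (\bigcup_k (F k : set T) `&` C)).
  rewrite (_ : A `&` \bigcup_k (F k : set T) `&` C =
               \bigcup_k (A `&` (F k : set T) `&` C)); last first.
    apply/seteqP; split => x /=.
      by move=> [[Ax [n _ Fx]] Cx]; exists n.
    by move=> [n _ [[Ax Fx] Cx]]; split => //; split => //; exists n.
  rewrite (_ : \bigcup_k (F k : set T) `&` C = \bigcup_k ((F k : set T) `&` C)); last first.
    apply/seteqP; split => x /=.
      by move=> [[n _ Fx] Cx]; exists n.
    by move=> [n _ [Fx Cx]]; split => //; exists n.
  have m1 n : measurable (A `&` (F n : set T) `&` C).
    by apply: measurableI => //; apply: measurableI.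
  have m2 n : measurable ((F n : set T) `&` C) by apply: measurableI.
  rewrite !measure_semi_bigcup //.
  - change (\sum_(i <oo) P (A `&` (F i : set T) `&` C) =
            c%:E * \sum_(i <oo) P ((F i : set T) `&` C)).
    under eq_eseriesr do rewrite hF.
    by rewrite nneseriesZl // => i _; exact: measure_ge0.
  - by move=> i j _ _ [x [[Fi _] [Fj _]]]; apply: tF => //; exists x.
  - exact: bigcup_measurable.
  - by move=> i j _ _ [x [[[_ Fi] _] [[_ Fj] _]]]; apply: tF => //; exists x.
  - exact: bigcup_measurable.
Qed.
End Main.

Unset Implicit Arguments.

Theorem lemma1 (d : measure_display) (T : measurableType d) (R : realType)
  (P : probability T R)
  (nx ny ne k nphi npsi : nat)
  (X : 'I_nx -> T -> R) (Y : 'I_ny -> T -> R) (E : 'I_ne -> T -> R)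
  (Phi : 'I_k -> T -> R)
  (Ephi : 'I_nphi -> T -> R) (Epsi : 'I_npsi -> T -> R) :
  is_rv X -> is_rv Y -> is_rv E ->
  (* Phi is sigma(X)-measurable *)
  G_measurable_rv (rv_sigma X) Phi ->
  (* Ephi is sigma(E)-measurable, Phi ⊥ E | Ephi, and Ephi is minimal with this property *)
  G_measurable_rv (rv_sigma E) Ephi ->
  cond_indep P (rv_sigma Phi) (rv_sigma E) (rv_sigma Ephi) ->
  (forall (m : nat) (Z : 'I_m -> T -> R),
      G_measurable_rv (rv_sigma E) Z ->
      cond_indep P (rv_sigma Phi) (rv_sigma E) (rv_sigma Z) ->
      rv_sigma Z `<=` rv_sigma Ephi -> rv_sigma Z = rv_sigma Ephi) ->
  (* Epsi independent of Ephi, sigma(E) = sigma(Ephi, Epsi) *)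
  is_rv Epsi ->
  indep P (rv_sigma Ephi) (rv_sigma Epsi) ->
  rv_sigma E = sigma_join (rv_sigma Ephi) (rv_sigma Epsi) ->
  (* Phi is an invariant feature *)
  invariant_feature P Phi Y E ->
  cond_indep P (rv_sigma Epsi) (sigma_join (rv_sigma Phi) (rv_sigma Y))
    (rv_sigma Ephi).
Proof.
move=> hX hY hE hPhiX hEphiE hCI _ hEpsi hind hEj hinv.
have mE := rv_meas hE.
have mY := rv_meas hY.
have mX := rv_meas hX.
have mEpsi := rv_meas hEpsi.
have sEphiE : forall A, rv_sigma Ephi A -> rv_sigma E A.
  by apply: Gm_sub hEphiE; exact: smallest_sigma_algebra.
have sPhiX : forall A, rv_sigma Phi A -> rv_sigma X A.
  by apply: Gm_sub hPhiX; exact: smallest_sigma_algebra.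
have mPhi : forall A, rv_sigma Phi A -> measurable A.
  by move=> A h; apply: mX; exact: sPhiX.
have mEphi : forall A, rv_sigma Ephi A -> measurable A.
  by move=> A h; apply: mE; exact: sEphiE.
have sEpsiE : forall A, rv_sigma Epsi A -> rv_sigma E A.
  by move=> A h; rewrite hEj; apply: sub_sigma_algebra; right.
have mJ : forall B, sigma_join (rv_sigma Phi) (rv_sigma Y) B -> measurable B.
  apply: smallest_sub; first exact: sigma_algebra_measurable.
  by move=> B [h|h]; [exact: mPhi|exact: mY].
move=> A B hA hB.
set c := fine (P A).
have PAE : P A = c%:E by rewrite fineK // fin_num_measure //; exact: mEpsi.
have mA := mEpsi _ hA.
have mB := mJ _ hB.
have hind' : forall C', rv_sigma Ephi C' -> P (C' `&` A) = (P C' * P A)%E.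
  by move=> C' h; exact: hind.
have hstar : forall C, rv_sigma Ephi C -> P (A `&` B `&` C) = (c%:E * P (B `&` C))%E.
  move=> C hC.
  have hAC : rv_sigma E (A `&` C) by apply: gsI; [exact: sEpsiE|exact: sEphiE].
  exact: (star mPhi mY mEphi mA hC hAC (sEphiE _ hC) hind' hCI hinv hB).
have [fB vB] := cond_exists P mEphi mB.
have [gmB iB intB] := vB.
exists (cst c), fB; split => //.
- split.
  + move=> Z mZ; rewrite preimage_cst; case: ifP => _; [exact: gsT|exact: sigma_algebra0].
  + exact: finite_measure_integrable_cst.
  + move=> C hC.
    have -> : (\int[P]_(x in C) ((cst c) x)%:E = \int[P]_(x in C) (cst c%:E) x)%E by [].
    rewrite integral_cst; last exact: mEphi.
    by rewrite setIC hind' // PAE muleC.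
- split.
  + apply/Gm_mfun; apply: measurable_funM; first exact: measurable_cst.
    exact/Gm_mfun.
  + have -> : EFin \o (cst c \* fB) = (fun x => c%:E * (EFin \o fB) x)%E.
      by apply/funext => x /=; rewrite EFinM.
    exact: integrableZl.
  + move=> C hC.
    have mC := mEphi _ hC.
    have -> : (\int[P]_(x in C) ((cst c \* fB) x)%:E =
               \int[P]_(x in C) (c%:E * (EFin \o fB) x))%E.
      by apply: eq_integral => x _ /=; rewrite EFinM.
    rewrite integralZl //; last exact: integrableS iB.
    by rewrite intB // -hstar // setIA.
Qed.
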